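(* Let $\sigma(x,y)=(x\rightharpoonup y,x\leftharpoonup y)$ be an involutive left-non-degenerate quiver-theoretic Yang--Baxter map on a quiver $\mathscr{A}$ over $\Lambda$, let $x\star y:=(x\rightharpoonup\cdot)^{-1}(y)$ for $\mathfrak{s}(x)=\mathfrak{s}(y)$, and let $(\hat{\mathscr{A}},\hat\star)$ be the completion of the weak RC-system $(\mathscr{A},\star)$. Then the structure category $\mathscr{C}(\hat{\mathscr{A}})$ of the unital weak RC-system $(\hat{\mathscr{A}},\hat\star)$ is isomorphic to the structure category $\mathscr{C}(\sigma)$ of $\sigma$.
   Context: A quiver-theoretic Yang--Baxter map is a source/target-preserving map $\sigma$ on composable pairs satisfying the braid relation; involutive: $\sigma^2=\mathrm{id}$; left-non-degenerate: each $x\rightharpoonup\cdot\colon\mathscr{A}(\mathfrak{t}(x),\Lambda)\to\mathscr{A}(\mathfrak{s}(x),\Lambda)$ is bijective. $\mathscr{C}(\sigma)$ is the category presented by generators $\mathscr{A}$ and relations $x|y\sim(x\rightharpoonup y)|(x\leftharpoonup y)$ (path category modulo the generated congruence). A weak RC-system $(Q,\star)$: a quiver with partial operation such that $x\star y$ is defined only if $\mathfrak{s}(x)=\mathfrak{s}(y)$; if $x\star y$ is defined so is $y\star x$, $\mathfrak{s}(x\star y)=\mathfrak{t}(x)$, $\mathfrak{s}(y\star x)=\mathfrak{t}(y)$, $\mathfrak{t}(x\star y)=\mathfrak{t}(y\star x)$; and RC-law: if $x\star y,x\star z,(x\star y)\star(x\star z)$ are defined then $y\star z,(y\star x)\star(y\star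 z)$ are defined and $(x\star y)\star(x\star z)=(y\star x)\star(y\star z)$. A unit family is a family $\mathcal{E}=\{\epsilon_\lambda\}$ of loops $\epsilon_\lambda\colon\lambda\to\lambda$ with $x\star\epsilon_{\mathfrak{s}(x)}=\epsilon_{\mathfrak{t}(x)}$, $\epsilon_{\mathfrak{s}(x)}\star x=x$, $x\star x=\epsilon_{\mathfrak{t}(x)}$ (all defined) for all $x$; the system is unital if it has a unit family and $x\star y=y\star x=\epsilon_\mu$ with $x,y$ of target $\mu$ implies $x=y$. The completion $(\hat Q,\hat\star)$ adds a new loop $\epsilon_\lambda\notin Q$ at each vertex and sets $\epsilon_{\mathfrak{s}(y)}\hat\star y=y$, $x\hat\star\epsilon_{\mathfrak{s}(x)}=\epsilon_{\mathfrak{t}(x)}$, $x\hat\star x=\epsilon_{\mathfrak{t}(x)}$, and $x\hat\star y=x\star y$ otherwise. For a unital weak RC-system, $\star$ extends to paths by filling grids: for nonempty paths $\alpha=a_1|\dots|a_r$, $\beta=b_1|\dots|b_s$ with common source, fill an $r\times s$ grid whose squares are $(x,y)\mapsto(x\star y,y\star x)$ and let $\alpha\star\beta$ be the right column; with $\varepsilon\star\varepsilon=\varepsilon$, $\varepsilon\star\alpha=\alpha$, $\alpha\star\varepsilon=\varepsilon$ for empty paths $\varepsilon$. Define $\alpha\equiv\beta$ iff $\alpha\star\beta$ and $\beta\star\alpha$ both lie in $\mathrm{Path}(\mathcal{E})$; this is a congruence and the structure category is $\mathscr{C}(Q)=\mathrm{Path}(Q)/\!\equiv$. (Under the hypotheses,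 $(\hat{\mathscr{A}},\hat\star)$ is a unital weak RC-system.) *)

(* Defs.v *)
From Stdlib Require Import List ClassicalEpsilon.
Import ListNotations.
Set Implicit Arguments.

(* A quiver: vertex type V, arrow type E, source s and target t.
   A path is a source vertex together with a list of arrows read left to right:
   x | y is composable iff t x = s y. *)
Section Paths.
Variables (V E : Type) (s t : E -> V).

Fixpoint chain (v : V) (l : list E) : Prop :=
  match l with
  | [] => True
  | x :: l' => s x = v /\ chain (t x) l'
  end.

Fixpoint endv (v : V) (l : list E) : V :=
  match l with
  | [] => v
  | x :: l' => endv (t x) l'
  end.

Definition path := (V * list E)%type.
Definition pvalid (p : path) : Prop := chain (fst p) (snd p).
Definition psrc (p : path) : V := fst p.
Definition ptgt (p : path) : V := endv (fst p) (snd p).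
Definition pid (v : V) : path := (v, []).
Definition pcat (p q : path) : path := (fst p, snd p ++ snd q).
End Paths.

Record PCat := {
  Ob : Type;
  Mor : Type;
  msrc : Mor -> Ob;
  mtgt : Mor -> Ob;
  mvalid : Mor -> Prop;     (* representatives that are actual morphisms *)
  mid : Ob -> Mor;
  mcomp : Mor -> Mor -> Mor; (* diagrammatic: mcomp f g = "f then g" *)
  meq : Mor -> Mor -> Prop   (* the congruence defining the quotient *)
}.

Definition is_functor (C D : PCat) (fo : Ob C -> Ob D) (F : Mor C -> Mor D) : Prop :=
  (forall p, mvalid C p ->
     mvalid D (F p) /\ msrc D (F p) = fo (msrc C p) /\ mtgt D (F p) = fo (mtgt C p)) /\
  (forall p q, mvalid C p -> mvalid C q -> meq C p q -> meq D (F p) (F q)) /\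
  (forall a, meq D (F (mid C a)) (mid D (fo a))) /\
  (forall p q, mvalid C p -> mvalid C q -> mtgt C p = msrc C q ->
     meq D (F (mcomp C p q)) (mcomp D (F p) (F q))).

Definition cat_iso (C D : PCat) : Prop :=
  exists (fo : Ob C -> Ob D) (go : Ob D -> Ob C) (F : Mor C -> Mor D) (G : Mor D -> Mor C),
    is_functor C D fo F /\ is_functor D C go G /\
    (forall a, go (fo a) = a) /\ (forall b, fo (go b) = b) /\
    (forall p, mvalid C p -> meq C (G (F p)) p) /\
    (forall q, mvalid D q -> meq D (F (G q)) q).

(* sigma(x,y) = (lact x y, ract x y) = (x -> y, x <- y), meaningful on composable
   pairs t x = s y (values elsewhere are irrelevant). *)
Section YB.
Variables (L A : Type) (s t : A -> L) (lact ract : A -> A -> A).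

Definition sigma (x y : A) : A * A := (lact x y, ract x y).

Definition st_preserving : Prop :=
  forall x y, t x = s y ->
    s (lact x y) = s x /\ t (lact x y) = s (ract x y) /\ t (ract x y) = t y.

(* sigma_1 sigma_2 sigma_1 = sigma_2 sigma_1 sigma_2 on composable triples x|y|z *)
Definition braid : Prop :=
  forall x y z, t x = s y -> t y = s z ->
    (let '(a1, b1) := sigma x y in
     let '(b2, c2) := sigma b1 z in
     let '(a3, b3) := sigma a1 b2 in (a3, b3, c2))
    =
    (let '(b1, c1) := sigma y z in
     let '(a2, b2) := sigma x b1 in
     let '(b3, c3) := sigma b2 c1 in (a2, b3, c3)).

Definition qYB_map : Prop := st_preserving /\ braid.

Definition involutive : Prop :=
  forall x y, t x = s y -> sigma (lact x y) (ract x y) = (x, y).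

Definition left_nondeg : Prop :=
  forall x,
    (forall y z, s y = t x -> s z = t x -> lact x y = lact x z -> y = z) /\
    (forall z, s z = s x -> exists y, s y = t x /\ lact x y = z).

Inductive sig_cong : path L A -> path L A -> Prop :=
| sc_gen x y : t x = s y -> sig_cong (s x, [x; y]) (s x, [lact x y; ract x y])
| sc_refl p : pvalid s t p -> sig_cong p p
| sc_sym p q : sig_cong q p -> sig_cong p q
| sc_trans p q r : sig_cong p q -> sig_cong q r -> sig_cong p r
| sc_cat p p' q q' : sig_cong p p' -> sig_cong q q' -> ptgt t p = psrc q ->
    sig_cong (pcat p q) (pcat p' q').

Definition C_sigma : PCat :=
  {| Ob := L; Mor := path L A; msrc := @psrc L A; mtgt := ptgt t;
     mvalid := pvalid s t; mid := @pid L A; mcomp := @pcat L A; meq := sig_cong |}.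
End YB.

Section RC.
Variables (V E : Type) (s t : E -> V) (star : E -> E -> E) (isunit : E -> Prop).

(* one row of the grid: transport the column b past the arrow x *)
Fixpoint star1 (x : E) (b : list E) : list E :=
  match b with
  | [] => []
  | y :: b' => star x y :: star1 (star y x) b'
  end.

(* alpha * beta: right column of the grid with alpha on top, beta on the left *)
Fixpoint starp (a b : list E) : list E :=
  match a with
  | [] => b
  | x :: a' => starp a' (star1 x b)
  end.

Definition rc_equiv (p q : path V E) : Prop :=
  pvalid s t p /\ pvalid s t q /\ psrc p = psrc q /\
  Forall isunit (starp (snd p) (snd q)) /\ Forall isunit (starp (snd q) (snd p)).

Definition C_rc : PCat :=
  {| Ob := V; Mor := path V E; msrc := @psrc V E; mtgt := ptgt t;
     mvalid := pvalid s t; mid := @pid V E; mcomp := @pcat V E; meq := rc_equiv |}.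
End RC.

Inductive hat (L A : Type) : Type :=
| harr : A -> hat L A
| heps : L -> hat L A.
Arguments harr {L A}.
Arguments heps {L A}.

Section Completion.
Variables (L A : Type) (s t : A -> L) (star : A -> A -> A).

Definition hs (x : hat L A) : L := match x with harr a => s a | heps v => v end.
Definition ht (x : hat L A) : L := match x with harr a => t a | heps v => v end.
Definition is_heps (x : hat L A) : Prop := match x with harr _ => False | heps _ => True end.

(* eps_{s y} ^* y = y ; x ^* eps_{s x} = eps_{t x} ; x ^* x = eps_{t x} ;
   otherwise x ^* y = x * y   (only meaningful when hs x = hs y) *)
Definition hstar (x y : hat L A) : hat L A :=
  match x, y with
  | heps _, _ => y
  | harr a, heps _ => heps (t a)
  | harr a, harr b =>
      if excluded_middle_informative (a = b) then heps (t a) else harr (star a b)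
  end.

Definition C_hat : PCat := C_rc hs ht hstar is_heps.
End Completion.

(* Main.v *)
Require Import Defs.
From Stdlib Require Import List Permutation ClassicalEpsilon Lia.
Import ListNotations.

Lemma chain_app (V E : Type) (s t : E -> V) (l1 l2 : list E) (v : V) :
  chain s t v (l1 ++ l2) <-> chain s t v l1 /\ chain s t (endv t v l1) l2.
Proof.
  revert v; induction l1 as [|x l1 IH]; intros v; simpl.
  - tauto.
  - rewrite IH. tauto.
Qed.

Lemma endv_app (V E : Type) (t : E -> V) (l1 l2 : list E) (v : V) :
  endv t v (l1 ++ l2) = endv t (endv t v l1) l2.
Proof. revert v; induction l1; simpl; auto. Qed.

Section Main.
Variables (L A : Type) (s t : A -> L) (lact ract : A -> A -> A) (star : A -> A -> A).
Hypothesis HYB : qYB_map s t lact ract.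
Hypothesis Hinv : involutive s t lact ract.
Hypothesis Hlnd : left_nondeg s t lact.
Hypothesis Hstar : forall x y, s x = s y -> s (star x y) = t x /\ lact x (star x y) = y.

Lemma stp x y : t x = s y ->
  s (lact x y) = s x /\ t (lact x y) = s (ract x y) /\ t (ract x y) = t y.
Proof. destruct HYB as [H _]. apply H. Qed.

Lemma linj x y z : s y = t x -> s z = t x -> lact x y = lact x z -> y = z.
Proof. destruct (Hlnd x) as [H _]. apply H. Qed.

Lemma star_s x y : s x = s y -> s (star x y) = t x.
Proof. intros H; apply (Hstar x y H). Qed.
Lemma star_l x y : s x = s y -> lact x (star x y) = y.
Proof. intros H; apply (Hstar x y H). Qed.

Lemma star_lact x z : s z = t x -> star x (lact x z) = z.
Proof.
  intros H. destruct (stp x z) as [H1 _]; [auto|].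
  apply (linj x); auto. apply star_s; auto. apply star_l; auto.
Qed.

Lemma Kr a b : s a = s b -> ract a (star a b) = star b a.
Proof.
  intros H. set (y := star a b).
  assert (Hy : t a = s y) by (symmetry; apply star_s; auto).
  destruct (stp a y Hy) as [H1 [H2 H3]].
  pose proof (Hinv a y Hy) as Hi. unfold sigma in Hi.
  unfold y in *; rewrite (star_l a b H) in Hi, H1, H2. injection Hi as Hi1 Hi2.
  apply (linj b).
  - auto.
  - apply star_s. congruence.
  - rewrite Hi1. symmetry. apply star_l. congruence.
Qed.

Lemma BR x y z : t x = s y -> t y = s z ->
  lact (lact x y) (lact (ract x y) z) = lact x (lact y z).
Proof.
  intros H1 H2. destruct HYB as [_ Hb]. specialize (Hb x y z H1 H2).
  unfold sigma in Hb. simpl in Hb. injection Hb; auto.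
Qed.

Lemma t_star a b : s a = s b -> t (star a b) = t (star b a).
Proof.
  intros H. rewrite <- (Kr a b H).
  destruct (stp a (star a b)) as [_ [_ H3]]; [symmetry; apply star_s; auto|]. auto.
Qed.

Lemma BRstar a b z : s a = s b -> s z = t (star a b) ->
  lact a (lact (star a b) z) = lact b (lact (star b a) z).
Proof.
  intros H Hz. rewrite <- (BR a (star a b) z).
  - rewrite (star_l a b H), (Kr a b H). auto.
  - symmetry; apply star_s; auto.
  - auto.
Qed.

Lemma RC a b c : s a = s b -> s a = s c ->
  star (star a b) (star a c) = star (star b a) (star b c).
Proof.
  intros Hab Hac. set (y' := star a b). set (w := star y' (star a c)).
  assert (Hy' : s y' = t a) by (apply star_s; auto).
  assert (Hc' : s (star a c) = t a) by (apply star_s; auto).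
  assert (Hw : s w = t y') by (apply star_s; congruence).
  assert (Hlw : lact y' w = star a c) by (apply star_l; congruence).
  pose proof (BR a y' w (eq_sym Hy') (eq_sym Hw)) as HB.
  rewrite Hlw, (star_l a c Hac) in HB. unfold y' in HB.
  rewrite (star_l a b Hab), (Kr a b Hab) in HB. fold y' in HB.
  assert (Hw2 : s w = t (star b a)) by (rewrite Hw; apply t_star; auto).
  assert (HX : s (lact (star b a) w) = t b).
  { destruct (stp (star b a) w) as [Z _]; [auto|]. rewrite Z. apply star_s. congruence. }
  rewrite <- (star_lact (star b a) w Hw2). f_equal.
  rewrite <- HB. symmetry. apply star_lact. auto.
Qed.

Fixpoint phi (l : list A) : list A :=
  match l with [] => [] | x :: l' => x :: map (lact x) (phi l') end.
Definition lamA (l : list A) (z : A) : A := fold_right lact z l.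

Lemma phi_length l : length (phi l) = length l.
Proof. induction l; simpl; auto. rewrite length_map; auto. Qed.

Lemma phi_app l1 l2 : phi (l1 ++ l2) = phi l1 ++ map (lamA l1) (phi l2).
Proof.
  induction l1 as [|x l1 IH]; simpl.
  - rewrite map_id. auto.
  - rewrite IH, map_app, map_map. auto.
Qed.

Lemma phi_src v l : chain s t v l -> Forall (fun e => s e = v) (phi l).
Proof.
  revert v; induction l as [|x l IH]; intros v Hc; simpl in *; auto.
  destruct Hc as [H1 H2]. constructor; auto.
  apply Forall_map. specialize (IH _ H2). eapply Forall_impl; [|exact IH].
  intros e He. simpl in He. destruct (stp x e) as [Z _]; auto. congruence.
Qed.

Lemma lamA_src v l z : chain s t v l -> s z = endv t v l -> s (lamA l z) = v.
Proof.
  revert v; induction l as [|x l IH]; intros v Hc Hz; simpl in *; auto.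
  destruct Hc as [H1 H2]. specialize (IH _ H2 Hz).
  destruct (stp x (lamA l z)) as [Z _]; auto. congruence.
Qed.

Lemma sig_inv p q : sig_cong s t lact ract p q ->
  pvalid s t p /\ pvalid s t q /\ psrc p = psrc q /\ ptgt t p = ptgt t q /\
  Permutation (phi (snd p)) (phi (snd q)) /\
  (forall z, s z = ptgt t p -> lamA (snd p) z = lamA (snd q) z).
Proof.
  induction 1 as [x y H|p H|p q H IH|p q r H1 IH1 H2 IH2|p p' q q' H1 IH1 H2 IH2 Ht].
  - unfold pvalid, psrc, ptgt; simpl.
    destruct (stp x y H) as [Z1 [Z2 Z3]].
    pose proof (Hinv x y H) as Hi. unfold sigma in Hi. injection Hi as Hi1 Hi2.
    repeat split; auto.
    + rewrite Hi1. apply perm_swap.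
    + intros z Hz. simpl. symmetry. apply BR; auto.
  - repeat split; auto.
  - destruct IH as [A1 [A2 [A3 [A4 [A5 A6]]]]]. repeat split; auto.
    + apply Permutation_sym; auto.
    + intros z Hz. symmetry. apply A6. congruence.
  - destruct IH1 as [A1 [A2 [A3 [A4 [A5 A6]]]]].
    destruct IH2 as [B1 [B2 [B3 [B4 [B5 B6]]]]].
    repeat split; try congruence; auto.
    + eapply Permutation_trans; eauto.
    + intros z Hz. rewrite A6; auto. apply B6. congruence.
  - destruct IH1 as [A1 [A2 [A3 [A4 [A5 A6]]]]].
    destruct IH2 as [B1 [B2 [B3 [B4 [B5 B6]]]]].
    unfold pvalid, psrc, ptgt, pcat in *; simpl in *.
    destruct p as [pv pl], p' as [pv' pl'], q as [qv ql], q' as [qv' ql']; simpl in *.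
    repeat split.
    + apply chain_app. split; auto. congruence.
    + apply chain_app. split; auto. congruence.
    + auto.
    + rewrite !endv_app. congruence.
    + rewrite !phi_app. apply Permutation_app; auto.
      replace (map (lamA pl) (phi ql)) with (map (lamA pl') (phi ql)).
      * apply Permutation_map; auto.
      * apply map_ext_in. intros a Ha. symmetry. apply A6.
        pose proof (phi_src _ _ B1) as F. rewrite Forall_forall in F.
        rewrite F; auto.
    + intros z Hz. rewrite endv_app in Hz. unfold lamA in *. rewrite !fold_right_app.
      rewrite B6 by congruence. apply A6.
      rewrite Ht, B3. apply (lamA_src qv' ql' z); auto. rewrite <- B4. congruence.
Qed.

Definition srcs (v : L) (l : list A) := Forall (fun e => s e = v) l.

Fixpoint psin (n : nat) (l : list A) : list A :=
  match n with 0 => [] | S n' =>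
    match l with [] => [] | u :: l' => u :: psin n' (map (star u) l') end end.
Definition psi (l : list A) := psin (length l) l.

Lemma psi_cons u l : psi (u :: l) = u :: psi (map (star u) l).
Proof. unfold psi; simpl; rewrite length_map; auto. Qed.

Lemma len_ind (P : list A -> Prop) :
  (forall l, (forall l', length l' < length l -> P l') -> P l) -> forall l, P l.
Proof.
  intros H. assert (forall n l, length l <= n -> P l).
  { induction n; intros l Hl; apply H; intros l' Hl'; [lia|]. apply IHn. lia. }
  intros l; apply (H0 (length l)); auto.
Qed.

Lemma srcs_star v u l : s u = v -> srcs v l -> srcs (t u) (map (star u) l).
Proof.
  intros Hu Hl. unfold srcs in *. apply Forall_map.
  eapply Forall_impl; [|exact Hl]. intros e He. apply star_s. congruence.
Qed.

Lemma psi_chain : forall l v, srcs v l -> chain s t v (psi l).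
Proof.
  apply (len_ind (fun l => forall v, srcs v l -> chain s t v (psi l))).
  intros [|u l] IH v Hl; [simpl; auto|].
  rewrite psi_cons. apply Forall_cons_iff in Hl. destruct Hl as [Hu Hl]. simpl. split; auto.
  apply IH. simpl; rewrite length_map; lia. apply (srcs_star v); auto.
Qed.

Lemma phi_psi : forall l v, srcs v l -> phi (psi l) = l.
Proof.
  apply (len_ind (fun l => forall v, srcs v l -> phi (psi l) = l)).
  intros [|u l] IH v Hl; [simpl; auto|].
  rewrite psi_cons. apply Forall_cons_iff in Hl. destruct Hl as [Hu Hl]. simpl.
  rewrite (IH (map (star u) l)) with (v := t u).
  2:{ simpl; rewrite length_map; lia. }
  2:{ apply (srcs_star v); auto. }
  f_equal. rewrite map_map. rewrite <- (map_id l) at 2. apply map_ext_in.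
  intros a Ha. apply star_l. unfold srcs in Hl. rewrite Forall_forall in Hl. rewrite (Hl a Ha); auto.
Qed.

Lemma psi_phi : forall l v, chain s t v l -> psi (phi l) = l.
Proof.
  induction l as [|x l IH]; intros v Hc; simpl; auto.
  destruct Hc as [H1 H2]. rewrite psi_cons. f_equal.
  rewrite map_map. rewrite <- (IH _ H2) at 2. f_equal.
  rewrite <- (map_id (phi l)) at 2. apply map_ext_in.
  intros a Ha. apply star_lact. pose proof (phi_src _ _ H2) as F.
  rewrite Forall_forall in F. auto.
Qed.

Lemma cons_cong v a l l' : s a = v -> sig_cong s t lact ract (t a, l) (t a, l') ->
  sig_cong s t lact ract (v, a :: l) (v, a :: l').
Proof.
  intros Ha H.
  change (sig_cong s t lact ract (pcat (v, [a]) (t a, l)) (pcat (v, [a]) (t a, l'))).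
  apply sc_cat; auto. apply sc_refl. unfold pvalid; simpl; auto.
Qed.

Lemma srcs_app v l1 l2 : srcs v (l1 ++ l2) <-> srcs v l1 /\ srcs v l2.
Proof. unfold srcs. apply Forall_app. Qed.

Lemma Move : forall n la, length la = n -> forall x lb v, srcs v (la ++ x :: lb) ->
  sig_cong s t lact ract (v, psi (la ++ x :: lb)) (v, psi (x :: la ++ lb)).
Proof.
  induction n as [|n IH]; intros la Hn x lb v Hs.
  - destruct la; [|simpl in Hn; lia]. simpl. apply sc_refl. apply psi_chain. auto.
  - destruct la as [|a la]; [simpl in Hn; lia|]. simpl in Hn.
    apply Forall_cons_iff in Hs. destruct Hs as [Ha Hs'].
    apply srcs_app in Hs'. destruct Hs' as [Hla Hxlb].
    apply Forall_cons_iff in Hxlb. destruct Hxlb as [Hx Hlb].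
    simpl app. rewrite psi_cons. rewrite map_app. simpl map.
    eapply sc_trans.
    + apply cons_cong; auto. apply IH. rewrite length_map; lia.
      apply srcs_app; split; [apply (srcs_star v); auto|].
      constructor. apply star_s; congruence. apply (srcs_star v); auto.
    + rewrite psi_cons, <- map_app, (psi_cons x). simpl map. rewrite (psi_cons (star x a)).
      rewrite map_map, map_map.
      set (M := la ++ lb).
      assert (HM : srcs (s a) M) by (rewrite Ha; apply srcs_app; auto).
      replace (map (fun x0 => star (star a x) (star a x0)) M)
        with (map (fun x0 => star (star x a) (star x x0)) M).
      2:{ apply map_ext_in. intros c Hc. symmetry. apply RC; auto; try congruence.
          unfold srcs in HM; rewrite Forall_forall in HM. symmetry; auto. }
      set (T := psi (map (fun x0 => star (star x a) (star x x0)) M)).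
      assert (Hax : s a = s x) by congruence.
      assert (HT : chain s t (t (star a x)) T).
      { apply psi_chain. unfold srcs in *. apply Forall_map.
        eapply Forall_impl; [|exact HM]. intros e He. simpl.
        rewrite t_star by auto. apply star_s. rewrite !star_s; auto; simpl in He; congruence. }
      pose proof (sc_gen s t lact ract a (star a x) (eq_sym (star_s a x Hax))) as G.
      rewrite (star_l a x Hax), (Kr a x Hax) in G.
      pose proof (sc_cat G (sc_refl s t lact ract (t (star a x), T) HT) eq_refl) as G2.
      unfold pcat in G2; simpl in G2. rewrite Ha in G2. exact G2.
Qed.

Lemma PermSig l1 l2 : Permutation l1 l2 -> forall v, srcs v l1 ->
  sig_cong s t lact ract (v, psi l1) (v, psi l2).
Proof.
  revert l2. induction l1 as [l1 IH] using len_ind. intros l2 HP v Hs.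
  destruct l1 as [|x l1].
  - apply Permutation_nil in HP; subst. apply sc_refl. unfold pvalid; simpl; auto.
  - assert (Hin : In x l2) by (eapply Permutation_in; eauto; left; auto).
    apply in_split in Hin. destruct Hin as [la [lb E]]; subst.
    apply Permutation_cons_app_inv in HP.
    assert (Hs2 : srcs v (la ++ x :: lb)).
    { unfold srcs in *. eapply Permutation_Forall; [|exact Hs].
      apply Permutation_cons_app; auto. }
    eapply sc_trans; [|apply sc_sym; apply (Move _ la eq_refl); auto].
    rewrite !psi_cons. apply Forall_cons_iff in Hs. destruct Hs as [Hx Hs]. apply cons_cong; auto.
    apply IH. simpl; rewrite length_map; lia. apply Permutation_map; auto.
    apply (srcs_star v); auto.
Qed.

Lemma perm_sig v l1 l2 : chain s t v l1 -> chain s t v l2 ->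
  Permutation (phi l1) (phi l2) -> sig_cong s t lact ract (v, l1) (v, l2).
Proof.
  intros H1 H2 HP. rewrite <- (psi_phi l1 v H1), <- (psi_phi l2 v H2).
  apply PermSig; auto. apply phi_src; auto.
Qed.

Notation HS := (@hs L A s).
Notation HT := (@ht L A t).
Notation HST := (@hstar L A t star).

Fixpoint filterA (l : list (hat L A)) : list A :=
  match l with
  | [] => []
  | harr a :: l' => a :: filterA l'
  | heps _ :: l' => filterA l'
  end.
Definition phih l := phi (filterA l).
Definition hl (x : hat L A) (z : A) : A := match x with harr a => lact a z | heps _ => z end.
Definition filt (x : hat L A) : list A := match x with harr a => [a] | heps _ => [] end.

Lemma filterA_chain l v : chain HS HT v l ->
  chain s t v (filterA l) /\ endv t v (filterA l) = endv HT v l.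
Proof.
  revert v; induction l as [|[a|w] l IH]; intros v Hc; simpl in *; auto.
  - destruct Hc as [H1 H2]. destruct (IH _ H2). auto.
  - destruct Hc as [H1 H2]. subst. auto.
Qed.

Lemma filterA_map l : filterA (map harr l) = l.
Proof. induction l; simpl; f_equal; auto. Qed.

Lemma map_harr_chain l v : chain s t v l -> chain HS HT v (map harr l) /\ endv HT v (map harr l) = endv t v l.
Proof.
  revert v; induction l as [|a l IH]; intros v Hc; simpl in *; auto.
  destruct Hc as [H1 H2]. destruct (IH _ H2). auto.
Qed.

Lemma filterA_app l1 l2 : filterA (l1 ++ l2) = filterA l1 ++ filterA l2.
Proof. induction l1 as [|[a|w] l IH]; simpl; f_equal; auto. Qed.

Lemma phih_cons x l : phih (x :: l) = filt x ++ map (hl x) (phih l).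
Proof. destruct x; unfold phih; simpl; auto. rewrite map_id; auto. Qed.

Lemma phih_src l v : chain HS HT v l -> srcs v (phih l).
Proof. intros H. apply phi_src. apply filterA_chain; auto. Qed.

Lemma hs_hstar x y : HS x = HS y -> HS (HST x y) = HT x.
Proof.
  destruct x as [a|w], y as [b|w']; simpl; intros H; auto.
  destruct (excluded_middle_informative (a = b)); simpl; auto. apply star_s; auto.
Qed.

Lemma ht_hstar x y : HS x = HS y -> HT (HST x y) = HT (HST y x).
Proof.
  destruct x as [a|w], y as [b|w']; simpl; intros H; auto.
  destruct (excluded_middle_informative (a = b)); destruct (excluded_middle_informative (b = a));
    simpl; subst; try congruence. apply t_star; auto.
Qed.

Lemma star1_eps w l : star1 HST (heps w) l = l.
Proof.
  revert w; induction l as [|y l IH]; intros w; simpl; auto.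
  destruct y; simpl; rewrite IH; auto.
Qed.

Lemma star1_chain l v x : chain HS HT v l -> HS x = v -> chain HS HT (HT x) (star1 HST x l).
Proof.
  revert v x; induction l as [|y l IH]; intros v x Hc Hx; simpl in *; auto.
  destruct Hc as [H1 H2]. split.
  - apply hs_hstar; congruence.
  - rewrite ht_hstar by congruence. apply (IH (HT y)); auto. apply hs_hstar; congruence.
Qed.

Lemma Row_arr : forall l a v, chain HS HT v l -> s a = v ->
  exists C1 D1, Permutation [a] (C1 ++ D1) /\
    Permutation (phih l) (C1 ++ map (lact a) (phih (star1 HST (harr a) l))) /\
    (forall e, In e D1 -> ~ In e (phih l)).
Proof.
  induction l as [|y l IH]; intros a v Hc Ha.
  - exists [], [a]. simpl. repeat split; auto.
  - destruct Hc as [Hy Hc]. destruct y as [b|w].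
    + simpl in Hy. simpl star1.
      destruct (excluded_middle_informative (a = b)) as [E|E].
      * subst b. destruct (excluded_middle_informative (a = a)) as [_|E']; [|congruence].
        rewrite star1_eps. exists [a], []. unfold phih; simpl. repeat split; auto.
      * destruct (excluded_middle_informative (b = a)) as [E'|_]; [congruence|].
        assert (Hab : s a = s b) by congruence.
        destruct (IH (star b a) (t b) Hc (star_s b a (eq_sym Hab))) as [C [D [P1 [P2 P3]]]].
        apply Permutation_length_1_inv in P1. symmetry in P1.
        set (out := star1 HST (harr (star b a)) l) in *.
        assert (Hout : srcs (t (star a b)) (phih out)).
        { rewrite t_star by auto. apply phih_src. unfold out. apply (star1_chain l (t b) (harr (star b a))); auto.
          simpl. apply star_s; congruence. }
        exists (map (lact b) C), (map (lact b) D). split; [|split].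
        -- rewrite <- map_app, <- P1. simpl. rewrite star_l by congruence. auto.
        -- unfold phih in *; simpl filterA; simpl phi. fold (phih l) (phih out) in *.
           simpl map. rewrite star_l by auto.
           eapply Permutation_trans; [|apply Permutation_middle]. apply perm_skip.
           eapply Permutation_trans; [apply Permutation_map; exact P2|].
           rewrite map_app. apply Permutation_app_head. rewrite !map_map.
           apply Permutation_refl'. apply map_ext_in. intros z Hz. symmetry. apply BRstar; auto.
           unfold srcs in Hout; rewrite Forall_forall in Hout; auto.
        -- intros e He Hin. symmetry in P1; apply app_eq_unit in P1.
           destruct P1 as [[_ HD]|[_ HD]]; subst D; simpl in He; [|contradiction].
           destruct He as [He|[]]. subst e. rewrite star_l in Hin by congruence.
           unfold phih in Hin; simpl in Hin. fold (phih l) in Hin.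
           destruct Hin as [Hin|Hin]; [congruence|].
           apply in_map_iff in Hin. destruct Hin as [z [Hz Hzin]].
           apply (P3 (star b a)); [left; auto|].
           assert (Hs : s z = t b).
           { pose proof (phih_src _ _ Hc) as F. unfold srcs in F; rewrite Forall_forall in F; auto. }
           assert (z = star b a).
           { apply (linj b); auto. apply star_s; congruence. rewrite star_l by congruence. auto. }
           subst z; auto.
    + simpl in Hy. subst w. simpl star1.
      destruct (IH a v Hc Ha) as [C [D [P1 [P2 P3]]]].
      exists C, D. unfold phih in *; simpl. auto.
Qed.

Lemma Row x l v : chain HS HT v l -> HS x = v ->
  exists C1 D1, Permutation (filt x) (C1 ++ D1) /\
    Permutation (phih l) (C1 ++ map (hl x) (phih (star1 HST x l))) /\
    (forall e, In e D1 -> ~ In e (phih l)).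
Proof.
  intros Hc Hx. destruct x as [a|w].
  - apply (Row_arr l a v); auto.
  - exists [], []. simpl. rewrite star1_eps, map_id. repeat split; auto.
Qed.

Lemma hl_inj x y z : s y = HT x -> s z = HT x -> hl x y = hl x z -> y = z.
Proof. destruct x as [a|w]; simpl; auto. apply linj. Qed.

Lemma Res : forall al bl v, chain HS HT v al -> chain HS HT v bl ->
  exists C D E, Permutation (phih al) (C ++ D) /\ Permutation (phih bl) (C ++ E) /\
    (forall e, In e E -> ~ In e D) /\ (E = [] <-> phih (starp HST al bl) = []).
Proof.
  induction al as [|x al IH]; intros bl v Ha Hb.
  - exists [], [], (phih bl). simpl. repeat split; auto.
  - destruct Ha as [Hx Ha]. simpl starp.
    destruct (Row x bl v Hb Hx) as [C1 [D1 [P1 [P2 P3]]]].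
    pose proof (star1_chain bl v x Hb Hx) as Hb'.
    destruct (IH _ _ Ha Hb') as [C2 [D2 [E2 [Q1 [Q2 [Q3 Q4]]]]]].
    exists (C1 ++ map (hl x) C2), (D1 ++ map (hl x) D2), (map (hl x) E2).
    split; [|split; [|split]].
    + rewrite phih_cons. eapply Permutation_trans.
      { apply Permutation_app; [exact P1|apply Permutation_map; exact Q1]. }
      rewrite map_app, <- !app_assoc. apply Permutation_app_head. apply Permutation_app_swap_app.
    + eapply Permutation_trans; [exact P2|]. rewrite <- app_assoc. apply Permutation_app_head.
      rewrite <- map_app. apply Permutation_map; auto.
    + intros e He HD. apply in_app_or in HD. destruct HD as [HD|HD].
      * apply (P3 e HD). eapply Permutation_in; [apply Permutation_sym; exact P2|].
        apply in_or_app. right. eapply Permutation_in; [apply Permutation_map, Permutation_sym; exact Q2|].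
        rewrite map_app. apply in_or_app; right; auto.
      * apply in_map_iff in He, HD. destruct He as [e1 [He1 Hin1]], HD as [d1 [Hd1 Hind1]].
        assert (Se : s e1 = HT x).
        { pose proof (phih_src _ _ Hb') as F. unfold srcs in F; rewrite Forall_forall in F.
          apply F. eapply Permutation_in; [apply Permutation_sym; exact Q2|]. apply in_or_app; auto. }
        assert (Sd : s d1 = HT x).
        { pose proof (phih_src _ _ Ha) as F. unfold srcs in F; rewrite Forall_forall in F.
          apply F. eapply Permutation_in; [apply Permutation_sym; exact Q1|]. apply in_or_app; auto. }
        assert (e1 = d1) by (apply (hl_inj x); congruence). subst d1.
        apply (Q3 e1); auto.
    + rewrite <- Q4. split; intros H; [destruct E2; simpl in H; congruence|subst; auto].
Qed.

Lemma heps_phih l : Forall (@is_heps L A) l <-> phih l = [].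
Proof.
  unfold phih. split; intros H.
  - induction H as [|[a|w] l Hx H IH]; simpl in *; auto. contradiction.
  - induction l as [|[a|w] l IH]; simpl in *; auto.
    + discriminate.
    + constructor; simpl; auto.
Qed.

Lemma sub_char al bl v : chain HS HT v al -> chain HS HT v bl ->
  (Forall (@is_heps L A) (starp HST al bl) <-> exists r, Permutation (phih al) (phih bl ++ r)).
Proof.
  intros Ha Hb. destruct (Res al bl v Ha Hb) as [C [D [E [P1 [P2 [P3 P4]]]]]].
  rewrite heps_phih, <- P4. split.
  - intros HE; subst E. exists D. rewrite app_nil_r in P2.
    eapply Permutation_trans; [exact P1|]. apply Permutation_app_tail. apply Permutation_sym; auto.
  - intros [r Hr]. destruct E as [|e E]; auto. exfalso.
    assert (Permutation (C ++ D) (C ++ (e :: E) ++ r)).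
    { eapply Permutation_trans; [apply Permutation_sym; exact P1|].
      eapply Permutation_trans; [exact Hr|]. rewrite app_assoc. apply Permutation_app_tail. auto. }
    apply Permutation_app_inv_l in H. apply (P3 e); [left; auto|].
    eapply Permutation_in; [apply Permutation_sym; exact H|]. left; auto.
Qed.

Lemma rc_char p q : pvalid HS HT p -> pvalid HS HT q -> psrc p = psrc q ->
  (rc_equiv HS HT HST (@is_heps L A) p q <-> Permutation (phih (snd p)) (phih (snd q))).
Proof.
  destruct p as [v l1], q as [w l2]. unfold pvalid, psrc; simpl. intros H1 H2 E; subst w.
  unfold rc_equiv, pvalid, psrc; simpl.
  rewrite (sub_char l1 l2 v), (sub_char l2 l1 v) by auto. split.
  - intros [_ [_ [_ [[r1 R1] [r2 R2]]]]].
    assert (Hl := Permutation_length R1). assert (Hl2 := Permutation_length R2).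
    rewrite length_app in Hl, Hl2.
    destruct r2; [|simpl in *; lia]. rewrite app_nil_r in R2. apply Permutation_sym; auto.
  - intros HP. repeat split; auto.
    + exists []. rewrite app_nil_r. auto.
    + exists []. rewrite app_nil_r. apply Permutation_sym; auto.
Qed.

Definition Ff (p : path L (hat L A)) : path L A := (fst p, filterA (snd p)).
Definition Gf (q : path L A) : path L (hat L A) := (fst q, map harr (snd q)).

Lemma Gvalid q : pvalid s t q -> pvalid HS HT (Gf q) /\ ptgt HT (Gf q) = ptgt t q.
Proof. destruct q as [v l]; unfold pvalid, ptgt, Gf; simpl. apply map_harr_chain. Qed.

Lemma Fvalid p : pvalid HS HT p -> pvalid s t (Ff p) /\ ptgt t (Ff p) = ptgt HT p.
Proof. destruct p as [v l]; unfold pvalid, ptgt, Ff; simpl. apply filterA_chain. Qed.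

Lemma rc_refl p : pvalid HS HT p -> rc_equiv HS HT HST (@is_heps L A) p p.
Proof. intros H. apply rc_char; auto. Qed.

Lemma main_iso : cat_iso (C_hat s t star) (C_sigma s t lact ract).
Proof.
  exists (fun a => a), (fun a => a), Ff, Gf.
  unfold is_functor, C_hat, C_rc, C_sigma; simpl.
  split; [|split; [|split; [|split; [|split]]]].
  - split; [|split; [|split]].
    + intros p Hp. destruct (Fvalid p Hp). repeat split; auto.
    + intros p q Hp Hq Hpq. assert (Hs : psrc p = psrc q) by apply Hpq.
      apply (rc_char p q Hp Hq Hs) in Hpq.
      destruct p as [v l1], q as [w l2]. unfold psrc in Hs; simpl in Hs; subst w.
      unfold Ff; simpl. apply perm_sig; auto; [apply (Fvalid (v, l1))|apply (Fvalid (v, l2))]; auto.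
    + intros a. apply sc_refl. unfold pvalid; simpl; auto.
    + intros p q Hp Hq Htq. destruct p as [v l1], q as [w l2]. unfold Ff, pcat; simpl.
      rewrite filterA_app. apply sc_refl. unfold pvalid; simpl. apply chain_app.
      destruct (Fvalid (v, l1) Hp) as [H1 H2]. destruct (Fvalid (w, l2) Hq) as [H3 H4].
      unfold pvalid, ptgt, psrc in *; simpl in *. split; auto. congruence.
  - split; [|split; [|split]].
    + intros p Hp. destruct (Gvalid p Hp). repeat split; auto.
    + intros p q Hp Hq Hpq. apply sig_inv in Hpq; auto.
      destruct Hpq as [_ [_ [Hs [_ [HP _]]]]].
      apply rc_char; [apply Gvalid; auto|apply Gvalid; auto|auto|].
      unfold Gf, phih; simpl. rewrite !filterA_map. auto.
    + intros a. apply rc_refl. unfold pvalid; simpl; auto.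
    + intros p q Hp Hq Htq. destruct p as [v l1], q as [w l2]. unfold Gf, pcat; simpl.
      rewrite map_app. apply rc_refl. unfold pvalid; simpl. apply chain_app.
      destruct (Gvalid (v, l1) Hp) as [H1 H2]. destruct (Gvalid (w, l2) Hq) as [H3 H4].
      unfold pvalid, ptgt, psrc in *; simpl in *. split; auto. congruence.
  - auto.
  - auto.
  - intros p Hp. destruct (Fvalid p Hp) as [H1 _]. destruct (Gvalid _ H1) as [H2 _].
    apply rc_char; auto. destruct p; unfold Gf, Ff, phih; simpl. rewrite filterA_map. auto.
  - intros q Hq. destruct q as [v l]. unfold Gf, Ff; simpl. rewrite filterA_map. apply sc_refl; auto.
Qed.

End Main.

Theorem lemma5p6 (L A : Type) (s t : A -> L) (lact ract : A -> A -> A)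
  (star : A -> A -> A)
  (HYB : qYB_map s t lact ract)
  (Hinv : involutive s t lact ract)
  (Hlnd : left_nondeg s t lact)
  (Hstar : forall x y, s x = s y -> s (star x y) = t x /\ lact x (star x y) = y) :
  cat_iso (C_hat s t star) (C_sigma s t lact ract).
Proof.
  eapply main_iso; eauto.
Qed.
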